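(* Let $\mathfrak g$ be a Lie algebra with a classical $r$-matrix $R$ and post-Lie product $x\triangleright y=[R_-x,y]$. Then $\overline{\mathfrak g}=\mathfrak g_R$, and the Hopf algebra isomorphism $\phi:\mathcal U(\overline{\mathfrak g})\to\mathcal U_\ast(\mathfrak g)$ extending the identity of $V$ coincides with $F=m_{\mathfrak g}\circ(\mathrm{id}\otimes S_{\mathfrak g})\circ(R_+\otimes R_-)\circ\Delta_{\mathfrak g_R}$.
   Context: All vector spaces are finite dimensional over $\mathbb K=\mathbb R$ or $\mathbb C$. Let $\mathfrak g=(V,[\cdot,\cdot])$ be a Lie algebra. A classical $r$-matrix is a linear map $R:V\to V$ satisfying $[Rx,Ry]=R([Rx,y]+[x,Ry])-[x,y]$ for all $x,y$. Then $[x,y]_R:=\frac12([Rx,y]+[x,Ry])$ is a Lie bracket; $\mathfrak g_R:=(V,[\cdot,\cdot]_R)$. The maps $R_\pm:=\frac12(R\pm\mathrm{id})$ are Lie algebra morphisms $\mathfrak g_R\to\mathfrak g$, extended (same notation) to unital algebra morphisms $\mathcal U(\mathfrak g_R)\to\mathcal U(\mathfrak g)$. $\Delta_{\mathfrak g_R}$: coproduct of $\mathcal U(\mathfrak g_R)$; $m_{\mathfrak g}$, $S_{\mathfrak g}$, $\Delta$, $\epsilon$: product, antipode, coproduct, counit of $\mathcal U(\mathfrak g)$; Sweedler notation $\Delta A=A_{(1)}\otimes A_{(2)}$. The product $x\triangleright y:=[R_-x,y]$ makes $\mathfrak g$ a post-Lie algebra ($x\triangleright[y,z]=[x\triangleright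 y,z]+[y,x\triangleright z]$, $[x,y]\triangleright z=a_\triangleright(x,y,z)-a_\triangleright(y,x,z)$, $a_\triangleright(x,y,z)=x\triangleright(y\triangleright z)-(x\triangleright y)\triangleright z$); $\overline{\mathfrak g}:=(V,[[\cdot,\cdot]])$ with $[[x,y]]:=x\triangleright y-y\triangleright x+[x,y]$. The product $\triangleright$ extends uniquely to $\mathcal U(\mathfrak g)$ with $\mathbf 1\triangleright A=A$, $A\triangleright\mathbf 1=\epsilon(A)\mathbf 1$, $xA\triangleright B=x\triangleright(A\triangleright B)-(x\triangleright A)\triangleright B$, $A\triangleright BC=(A_{(1)}\triangleright B)(A_{(2)}\triangleright C)$ ($x\in V$). $A\ast B:=A_{(1)}(A_{(2)}\triangleright B)$; $\mathcal U_\ast(\mathfrak g):=(\mathcal U(\mathfrak g),\ast,\mathbf 1,\Delta,\epsilon)$ is a Hopf algebra, and the identity of $V$ extends uniquely to a Hopf algebra isomorphism $\phi:\mathcal U(\overline{\mathfrak g})\to\mathcal U_\ast(\mathfrak g)$. *)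

(* Defs.v *)
From HB Require Import structures.
From mathcomp Require Import all_boot all_order all_algebra.
Set Implicit Arguments. Unset Strict Implicit. Unset Printing Implicit Defensive.
Import GRing.Theory.
Local Open Scope ring_scope.

Section Defs.
Variable K : fieldType.

Definition bilin (A B W : lmodType K) (b : A -> B -> W) : Prop :=
  (forall (a : K) x y z, b (a *: x + y) z = a *: b x z + b y z) /\
  (forall (a : K) x y z, b z (a *: x + y) = a *: b z x + b z y).

Definition is_lie_bracket (V : lmodType K) (br : V -> V -> V) : Prop :=
  bilin br /\ (forall x, br x x = 0) /\
  (forall x y z, br x (br y z) + br y (br z x) + br z (br x y) = 0).

Definition classical_rmatrix (V : lmodType K) (br : V -> V -> V)
  (R : V -> V) : Prop :=
  forall x y, br (R x) (R y) = R (br (R x) y + br x (R y)) - br x y.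

Definition Rplus (V : lmodType K) (R : V -> V) (x : V) : V :=
  2%:R^-1 *: (R x + x).
Definition Rminus (V : lmodType K) (R : V -> V) (x : V) : V :=
  2%:R^-1 *: (R x - x).

Definition brR (V : lmodType K) (br : V -> V -> V) (R : V -> V) (x y : V) : V :=
  2%:R^-1 *: (br (R x) y + br x (R y)).

Definition trV (V : lmodType K) (br : V -> V -> V) (R : V -> V) (x y : V) : V :=
  br (Rminus R x) y.

Definition brbar (V : lmodType K) (br : V -> V -> V) (R : V -> V) (x y : V) : V :=
  trV br R x y - trV br R y x + br x y.

Definition is_UEA (V : lmodType K) (br : V -> V -> V) (U : algType K)
  (iota : {linear V -> U}) : Prop :=
  (forall x y, iota (br x y) = iota x * iota y - iota y * iota x) /\
  (forall (A : algType K) (f : {linear V -> A}),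
     (forall x y, f (br x y) = f x * f y - f y * f x) ->
     exists h : {lrmorphism U -> A},
       (forall x, h (iota x) = f x) /\
       (forall g : {lrmorphism U -> A}, (forall x, g (iota x) = f x) -> g =1 h)).

(* Sweedler sum: for a representation D A = [:: (a_i, c_i)] of an element
   sum_i a_i (x) c_i of U (x) U, apply the bilinear map b *)
Definition sw (U : Type) (W : nmodType) (D : U -> seq (U * U))
  (b : U -> U -> W) (A : U) : W :=
  \sum_(p <- D A) b p.1 p.2.

(* D represents (via finite sums of elementary tensors) the coproduct of the
   enveloping algebra U, i.e. the algebra morphism U -> U (x) U with
   iota x |-> iota x (x) 1 + 1 (x) iota x: tested against all bilinear maps *)
Definition is_coproduct (V : lmodType K) (U : algType K) (iota : V -> U)
  (D : U -> seq (U * U)) : Prop :=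
  forall (W : lmodType K) (b : U -> U -> W), bilin b ->
    (forall (a : K) A B, sw D b (a *: A + B) = a *: sw D b A + sw D b B) /\
    sw D b 1 = b 1 1 /\
    (forall x A, sw D b (iota x * A) =
                 sw D (fun a c => b (iota x * a) c) A +
                 sw D (fun a c => b a (iota x * c)) A).

Definition is_counit (V : lmodType K) (U : algType K) (iota : V -> U)
  (eps : U -> K) : Prop :=
  (forall (a : K) A B, eps (a *: A + B) = a * eps A + eps B) /\
  eps 1 = 1 /\ (forall A B, eps (A * B) = eps A * eps B) /\
  (forall x, eps (iota x) = 0).

Definition is_antipode (V : lmodType K) (U : algType K) (iota : V -> U)
  (S : U -> U) : Prop :=
  (forall (a : K) A B, S (a *: A + B) = a *: S A + S B) /\
  S 1 = 1 /\ (forall A B, S (A * B) = S B * S A) /\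
  (forall x, S (iota x) = - iota x).

Definition is_tr_ext (V : lmodType K) (br : V -> V -> V) (R : V -> V)
  (U : algType K) (iota : V -> U) (eps : U -> K) (D : U -> seq (U * U))
  (tr : U -> U -> U) : Prop :=
  bilin tr /\
  (forall x y, tr (iota x) (iota y) = iota (trV br R x y)) /\
  (forall A, tr 1 A = A) /\
  (forall A, tr A 1 = eps A *: 1) /\
  (forall x A B, tr (iota x * A) B = tr (iota x) (tr A B) - tr (tr (iota x) A) B) /\
  (forall A B C, tr A (B * C) = sw D (fun a c => tr a B * tr c C) A).

Definition star (U : algType K) (D : U -> seq (U * U)) (tr : U -> U -> U)
  (A B : U) : U :=
  sw D (fun a c => a * tr c B) A.

Definition Fmap (UR U : algType K) (DR : UR -> seq (UR * UR))
  (Rp Rm : UR -> U) (S : U -> U) (A : UR) : U :=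
  sw DR (fun a c => Rp a * S (Rm c)) A.

End Defs.

(* Main.v *)
Require Import Defs.
From HB Require Import structures.
From mathcomp Require Import all_boot all_order all_algebra.
From mathcomp Require Import boolp.
Import GRing.Theory.
Local Open Scope ring_scope.
Set Implicit Arguments. Unset Strict Implicit.

Section Basics.
Variable K : fieldType.

Definition lin (A B : lmodType K) (f : A -> B) :=
  forall (k : K) x y, f (k *: x + y) = k *: f x + f y.

Lemma linD (A B : lmodType K) (f : A -> B) : lin f -> forall x y, f (x + y) = f x + f y.
Proof. by move=> h x y; have := h 1 x y; rewrite !scale1r. Qed.

Lemma lin0 (A B : lmodType K) (f : A -> B) : lin f -> f 0 = 0.
Proof. by move=> h; have := h (-1) 0 0; rewrite scaleN1r oppr0 add0r scaleN1r addNr. Qed.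

Lemma linZ (A B : lmodType K) (f : A -> B) : lin f -> forall k x, f (k *: x) = k *: f x.
Proof. by move=> h k x; have := h k x 0; rewrite !addr0 (lin0 h) addr0. Qed.

Lemma linN (A B : lmodType K) (f : A -> B) : lin f -> forall x, f (- x) = - f x.
Proof. by move=> h x; rewrite -scaleN1r (linZ h) scaleN1r. Qed.

Lemma linB (A B : lmodType K) (f : A -> B) : lin f -> forall x y, f (x - y) = f x - f y.
Proof. by move=> h x y; rewrite (linD h) (linN h). Qed.

Lemma bilin_l (A B W : lmodType K) (b : A -> B -> W) : bilin b -> forall z, lin (b ^~ z).
Proof. by case=> h _ z k x y; apply: h. Qed.

Lemma bilin_r (A B W : lmodType K) (b : A -> B -> W) : bilin b -> forall z, lin (b z).
Proof. by case=> _ h z k x y; apply: h. Qed.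

Lemma lin_id (A : lmodType K) : lin (@id A).
Proof. by []. Qed.

Lemma bilin_comp (A B A' B' W : lmodType K) (b : A -> B -> W) (f : A' -> A) (g : B' -> B) :
  bilin b -> lin f -> lin g -> bilin (fun a c => b (f a) (g c)).
Proof.
move=> hb hf hg; split=> k x y z.
  by rewrite hf (bilin_l hb).
by rewrite hg (bilin_r hb).
Qed.

Lemma bilin_compl (A B A' W : lmodType K) (b : A -> B -> W) (f : A' -> A) :
  bilin b -> lin f -> bilin (fun a c => b (f a) c).
Proof. by move=> hb hf; exact: (bilin_comp hb hf (@lin_id _)). Qed.
Lemma bilin_compr (A B B' W : lmodType K) (b : A -> B -> W) (g : B' -> B) :
  bilin b -> lin g -> bilin (fun a c => b a (g c)).
Proof. by move=> hb hg; exact: (bilin_comp hb (@lin_id _) hg). Qed.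

Lemma bilin_mul (U : algType K) : bilin (fun a c : U => a * c).
Proof. by split=> k x y z; rewrite ?mulrDl ?mulrDr -?scalerAl -?scalerAr. Qed.

Lemma bilin_add (A B W : lmodType K) (b1 b2 : A -> B -> W) :
  bilin b1 -> bilin b2 -> bilin (fun a c => b1 a c + b2 a c).
Proof.
move=> [h1 h1'] [h2 h2']; split=> k x y z.
  by rewrite h1 h2 scalerDr addrACA.
by rewrite h1' h2' scalerDr addrACA.
Qed.


Lemma lin_lmul (U : algType K) (u : U) : lin (fun a => u * a).
Proof. by move=> k x y; rewrite mulrDr scalerAr. Qed.

Lemma lin_comp (A B C : lmodType K) (f : B -> C) (g : A -> B) : lin f -> lin g -> lin (fun x => f (g x)).
Proof. by move=> hf hg k x y; rewrite hg hf. Qed.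

Lemma lin_linear (A B : lmodType K) (f : {linear A -> B}) : lin f.
Proof. by move=> k x y; rewrite linearP. Qed.

Lemma sw_ext (U : Type) (W : nmodType) (D : U -> seq (U * U)) (b1 b2 : U -> U -> W) A :
  (forall a c, b1 a c = b2 a c) -> sw D b1 A = sw D b2 A.
Proof. by move=> h; rewrite /sw; apply: eq_bigr => p _; apply: h. Qed.

Lemma sw_split (U : Type) (W : nmodType) (D : U -> seq (U * U)) (b1 b2 : U -> U -> W) A :
  sw D (fun a c => b1 a c + b2 a c) A = sw D b1 A + sw D b2 A.
Proof. by rewrite /sw big_split. Qed.

Lemma sw_map (U : Type) (W W' : lmodType K) (D : U -> seq (U * U)) (b : U -> U -> W) (f : W -> W') A :
  lin f -> f (sw D b A) = sw D (fun a c => f (b a c)) A.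
Proof.
move=> hf; rewrite /sw; elim: (D A) => [|p s IH]; first by rewrite !big_nil (lin0 hf).
by rewrite !big_cons (linD hf) IH.
Qed.

End Basics.
Lemma ac6 (W : zmodType) (z1 z2 y1 p q y2 : W) :
  z1 + z2 + (y1 + p + (q + y2)) = z1 + y1 + q + (p + (z2 + y2)).
Proof. rewrite -!addrA; congr (_ + _). rewrite addrCA; congr (_ + _).
by rewrite [LHS]addrCA (addrCA z2) [RHS]addrCA. Qed.

Lemma ac4 (W : zmodType) (p q r s : W) : p + (q - s) + (r + s) = p + (r + q).
Proof. by rewrite -addrA; congr (_ + _); rewrite addrCA subrK. Qed.

Section Gen.
Variable K : fieldType.
Variable V : lmodType K.
Variable U : algType K.
Variable iota : {linear V -> U}.

Inductive gen : U -> Prop :=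
| gen1 : gen 1
| genL a A B : gen A -> gen B -> gen (a *: A + B)
| genM x A : gen A -> gen (iota x * A).

Lemma gen0 : gen 0.
Proof. have := genL (-1) gen1 gen1. by rewrite scaleN1r addNr. Qed.

Lemma genMul A B : gen A -> gen B -> gen (A * B).
Proof.
move=> gA gB; elim: gA => [|a A1 A2 _ h1 _ h2|x A0 _ h].
- by rewrite mul1r.
- by rewrite mulrDl -scalerAl; apply: genL.
- by rewrite -mulrA; apply: genM.
Qed.

Definition genb : {pred U} := fun u => `[< gen u >].

Lemma genb_closed : GRing.subsemialg_closed genb.
Proof.
split.
- by apply/asboolP; exact: gen1.
- split; first by apply/asboolP; exact: gen0.
  move=> u v /asboolP gu /asboolP gv; apply/asboolP.
  by have := genL 1 gu gv; rewrite scale1r.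
- move=> a u /asboolP gu; apply/asboolP.
  by have := genL a gu gen0; rewrite addr0.
- move=> u v /asboolP gu /asboolP gv; apply/asboolP; exact: genMul.
Qed.

Definition G := {u : U | genb u}.
HB.instance Definition _ := [isSub for (@sval U genb : G -> U)].
HB.instance Definition _ := [Choice of G by <:].
HB.instance Definition _ := GRing.isSubalgClosed.Build K U genb genb_closed.
HB.instance Definition _ := [SubChoice_isSubAlgebra of G by <:].

Lemma genMi x : genb (iota x).
Proof. apply/asboolP; rewrite -[iota x]mulr1; apply: genM; exact: gen1. Qed.

Definition fG (x : V) : G := Sub (iota x) (genMi x).

Lemma fG_lin : linear fG.
Proof. by move=> a x y; apply: val_inj; rewrite /= linearP. Qed.

HB.instance Definition _ := GRing.isLinear.Build K V G _ fG fG_lin.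

Definition vG (u : G) : U := val u.
HB.instance Definition _ := GRing.RMorphism.copy vG val.
HB.instance Definition _ := GRing.Linear.copy vG val.

Lemma UEA_gen (br : V -> V -> V) : is_UEA br iota -> forall u, gen u.
Proof.
move=> [hbr huniv] u.
have hf : forall x y, fG (br x y) = fG x * fG y - fG y * fG x.
  by move=> x y; apply: val_inj; rewrite /= hbr.
have [h [hh _]] := huniv _ fG hf.
have [h0 [_ hu]] := huniv _ iota hbr.
have e1 : (vG \o h) =1 h0 by apply: hu => x; rewrite /= hh.
have e2 : (@idfun U) =1 h0 by apply: hu.
have : vG (h u) = u by have := e1 u; rewrite /= => ->; rewrite -(e2 u).
move=> <-; exact/asboolP/(valP (h u)).
Qed.
End Gen.

Section Coprod.
Variable K : fieldType.
Variable V : lmodType K.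
Variable U : algType K.
Variable iota : {linear V -> U}.
Variable D : U -> seq (U * U).
Hypothesis hD : is_coproduct iota D.
Lemma swL (W : lmodType K) (b : U -> U -> W) : bilin b -> lin (sw D b).
Proof. by move=> hb k x y; case: (hD hb) => h _; apply: h. Qed.
Lemma sw1 (W : lmodType K) (b : U -> U -> W) : bilin b -> sw D b 1 = b 1 1.
Proof. by move=> hb; case: (hD hb) => _ [h _]. Qed.
Lemma swM (W : lmodType K) (b : U -> U -> W) : bilin b -> forall x A,
  sw D b (iota x * A) = sw D (fun a c => b (iota x * a) c) A + sw D (fun a c => b a (iota x * c)) A.
Proof. by move=> hb; case: (hD hb) => _ [_ h]. Qed.
Lemma swi (W : lmodType K) (b : U -> U -> W) : bilin b -> forall x,
  sw D b (iota x) = b (iota x) 1 + b 1 (iota x).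
Proof. by move=> hb x; rewrite -[iota x]mulr1 swM // !sw1 ?mulr1 //; apply: bilin_comp => //; apply: lin_lmul. Qed.

End Coprod.

Section Main.
Variable K : fieldType.
Variable V : vectType K.
Variable br : V -> V -> V.
Variable R : {linear V -> V}.
Variable U : algType K.
Variable iota : {linear V -> U}.
Hypothesis hU : is_UEA br iota.
Variable eps : U -> K.
Hypothesis heps : is_counit iota eps.
Variable D : U -> seq (U * U).
Hypothesis hD : is_coproduct iota D.
Variable tr : U -> U -> U.
Hypothesis htr : is_tr_ext br R iota eps D tr.

Lemma tr_bil : bilin tr. Proof. by case: htr. Qed.
Lemma tr_ii x y : tr (iota x) (iota y) = iota (trV br R x y). Proof. by case: htr => _ []. Qed.
Lemma tr1l A : tr 1 A = A. Proof. by case: htr => _ [_ []]. Qed.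
Lemma tr1r A : tr A 1 = eps A *: 1. Proof. by case: htr => _ [_ [_ []]]. Qed.
Lemma trM x A B : tr (iota x * A) B = tr (iota x) (tr A B) - tr (tr (iota x) A) B.
Proof. by case: htr => _ [_ [_ [_ []]]]. Qed.
Lemma trMr A B C : tr A (B * C) = sw D (fun a c => tr a B * tr c C) A.
Proof. by case: htr => _ [_ [_ [_ [_ ]]]]. Qed.

Lemma tr_linl B : lin (tr ^~ B). Proof. exact: (bilin_l tr_bil B). Qed.
Lemma tr_linr A : lin (tr A). Proof. exact: (bilin_r tr_bil A). Qed.

Lemma tr_x1 x : tr (iota x) 1 = 0.
Proof. by rewrite tr1r; case: heps => _ [_ [_ ->]]; rewrite scale0r. Qed.

Lemma tr_der x B C : tr (iota x) (B * C) = tr (iota x) B * C + B * tr (iota x) C.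
Proof.
rewrite trMr (swi hD) ?tr1l //.
apply: (@bilin_comp _ _ _ _ _ _ (fun a c => a * c)); [exact: bilin_mul|exact: tr_linl|exact: tr_linl].
Qed.


Lemma genU u : gen iota u. Proof. exact: (UEA_gen hU). Qed.

Lemma tr_ad x C : tr (iota x) C =
  iota (Rminus R x) * C - C * iota (Rminus R x).
Proof.
set r := iota (Rminus R x).
elim: (genU C) => [|a A B _ hA _ hB|y A _ hA].
- by rewrite tr_x1 mulr1 mul1r subrr.
- rewrite tr_linr hA hB mulrDr mulrDl -scalerAr -scalerAl scalerBr.
  by rewrite addrACA opprD.
- rewrite tr_der hA tr_ii /trV; case: hU => -> _.
  rewrite mulrBl mulrBr !mulrA addrA subrK.
  done.
Qed.


Lemma tr_coder x C : forall (W : lmodType K) (b : U -> U -> W), bilin b ->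
  sw D b (tr (iota x) C) = sw D (fun a c => b (tr (iota x) a) c) C
                         + sw D (fun a c => b a (tr (iota x) c)) C.
Proof.
set t := tr (iota x).
have tl : lin t by exact: tr_linr.
elim: (genU C) => [|a A B _ hA _ hB|y A _ hA] W b hb.
- rewrite /t tr_x1 (lin0 (swL hD hb)) (sw1 hD (bilin_compl hb tl)).
  rewrite (sw1 hD (bilin_compr hb tl)) /=.
  by rewrite /t tr_x1 (lin0 (bilin_l hb 1)) (lin0 (bilin_r hb 1)) addr0.
- rewrite tl (swL hD hb) hA // hB // (swL hD (bilin_compl hb tl)).
  rewrite (swL hD (bilin_compr hb tl)).
  by rewrite scalerDr addrACA.
- set z := iota (trV br R x y).
  have ty : forall a, t (iota y * a) = z * a + iota y * t a.
    by move=> a; rewrite /t tr_der tr_ii.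
  have ly := lin_lmul (iota y).
  rewrite ty (linD (swL hD hb)) (swM hD hb) (swM hD hb).
  rewrite (hA _ (fun a c => b (iota y * a) c)); last exact: (bilin_compl hb ly).
  rewrite (hA _ (fun a c => b a (iota y * c))); last exact: (bilin_compr hb ly).
  rewrite (swM hD (bilin_compl hb tl)) (swM hD (bilin_compr hb tl)).
  have e1 : sw D (fun a c => b (t (iota y * a)) c) A =
     sw D (fun a c => b (z*a) c) A + sw D (fun a c => b (iota y * t a) c) A.
    by rewrite -sw_split; apply: sw_ext => a' c; rewrite ty (linD (bilin_l hb c)).
  have e2 : sw D (fun a c => b a (t (iota y * c))) A =
     sw D (fun a c => b a (z*c)) A + sw D (fun a c => b a (iota y * t c)) A.
    by rewrite -sw_split; apply: sw_ext => a' c; rewrite ty (linD (bilin_r hb a')).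
  by rewrite e1 e2 ac6.
Qed.


Lemma bil_star E : bilin (fun a c : U => a * tr c E).
Proof. exact: (bilin_compr (@bilin_mul _ U) (tr_linl E)). Qed.

Lemma star_lin E : lin (fun A => star D tr A E).
Proof. by move=> k A B; rewrite /star (swL hD (bil_star E)). Qed.

Lemma star1 E : star D tr 1 E = E.
Proof. by rewrite /star (sw1 hD (bil_star E)) mul1r tr1l. Qed.

Lemma star_iota x E : star D tr (iota x) E = iota x * E + tr (iota x) E.
Proof. by rewrite /star (swi hD (bil_star E)) tr1l mul1r. Qed.

Lemma star_step x C E : star D tr (iota x * C) E + star D tr (tr (iota x) C) E
  = iota x * star D tr C E + tr (iota x) (star D tr C E).
Proof.
rewrite /star (swM hD (bil_star E)) (tr_coder x C (bil_star E)).
rewrite (sw_map _ _ _ (lin_lmul (iota x))) (sw_map _ _ _ (tr_linr (iota x))).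
rewrite -!sw_split; apply: sw_ext => a c.
by rewrite trM tr_der mulrBr mulrA ac4.
Qed.


Hypothesis hK : [pchar K] =i pred0.
Variable S : U -> U.
Hypothesis hS : is_antipode iota S.
Variable UR : algType K.
Variable iotaR : {linear V -> UR}.
Hypothesis hUR : is_UEA (brR br R) iotaR.
Variable DR : UR -> seq (UR * UR).
Hypothesis hDR : is_coproduct iotaR DR.
Variables Rp Rm : {lrmorphism UR -> U}.
Hypothesis hRp : forall x, Rp (iotaR x) = iota (Rplus R x).
Hypothesis hRm : forall x, Rm (iotaR x) = iota (Rminus R x).

Lemma two_neq0 : (2%:R : K) != 0.
Proof. by have /pcharf0P h := hK; rewrite h. Qed.

Lemma half_eq (w : V) : 2%:R^-1 *: w = w - 2%:R^-1 *: w.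
Proof.
have e : (2%:R^-1 : K) + 2%:R^-1 = 1.
  by rewrite -mulr2n -[2%:R^-1 *+ 2]mulr_natr mulVf ?two_neq0.
by apply/eqP; rewrite eq_sym subr_eq -scalerDl e scale1r.
Qed.

Lemma Rplus_minus x : Rplus R x = x + Rminus R x.
Proof.
rewrite /Rplus /Rminus scalerDr scalerBr addrCA; congr (_ + _); exact: half_eq.
Qed.

Lemma lin_S : lin S. Proof. by case: hS. Qed.
Lemma S1 : S 1 = 1. Proof. by case: hS => _ []. Qed.
Lemma SM A B : S (A * B) = S B * S A. Proof. by case: hS => _ [_ []]. Qed.
Lemma Si x : S (iota x) = - iota x. Proof. by case: hS => _ [_ [_]]. Qed.

Lemma lin_Rp : lin Rp. Proof. by move=> k a b; rewrite linearP. Qed.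
Lemma lin_Rm : lin Rm. Proof. by move=> k a b; rewrite linearP. Qed.

Lemma lin_rmul (u : U) : lin (fun a => a * u).
Proof. by move=> k x y; rewrite mulrDl scalerAl. Qed.

Definition bF := fun a c => Rp a * S (Rm c).
Lemma bilF : bilin bF.
Proof. exact: (bilin_comp (@bilin_mul _ U) lin_Rp (lin_comp lin_S lin_Rm)). Qed.

Notation F := (Fmap DR Rp Rm S).

Lemma F_lin : lin F.
Proof. by move=> k a b; rewrite /Fmap (swL hDR bilF). Qed.

Lemma F1 : F 1 = 1.
Proof. by rewrite /Fmap (sw1 hDR bilF) /bF !rmorph1 S1 mulr1. Qed.

Lemma F_iota x : F (iotaR x) = iota x.
Proof.
rewrite /Fmap (swi hDR bilF) /bF !rmorph1 S1 mulr1 mul1r hRp hRm Si.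
by rewrite Rplus_minus linearD addrK.
Qed.

Lemma F_rec x A : F (iotaR x * A) = iota x * F A + tr (iota x) (F A).
Proof.
rewrite /Fmap (swM hDR bilF) tr_ad.
have -> : sw DR (fun a c => bF (iotaR x * a) c) A
          = sw DR (fun a c => iota (Rplus R x) * bF a c) A.
  by apply: sw_ext => a c; rewrite /bF rmorphM /= hRp mulrA. 
have -> : sw DR (fun a c => bF a (iotaR x * c)) A
          = sw DR (fun a c => bF a c * (- iota (Rminus R x))) A.
  by apply: sw_ext => a c; rewrite /bF rmorphM SM /= hRm Si mulrA.
rewrite -(sw_map _ _ _ (lin_lmul _)) -(sw_map _ _ _ (lin_rmul _)).
by rewrite Rplus_minus linearD mulrDl mulrN addrA.
Qed.

Lemma genUR u : gen iotaR u. Proof. exact: (UEA_gen hUR). Qed.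

Lemma F_mul A : forall B, F (A * B) = star D tr (F A) (F B).
Proof.
elim: (genUR A) => [|a A1 A2 _ h1 _ h2|y A1 _ h1] B.
- by rewrite mul1r F1 star1.
- by rewrite mulrDl -scalerAl !F_lin star_lin h1 h2.
- by rewrite -mulrA !F_rec h1 (linD (star_lin _)) star_step.
Qed.

Lemma F_unique (phi : UR -> U) :
  (forall (a : K) A B, phi (a *: A + B) = a *: phi A + phi B) ->
  phi 1 = 1 ->
  (forall A B, phi (A * B) = star D tr (phi A) (phi B)) ->
  (forall x, phi (iotaR x) = iota x) ->
  forall A, phi A = F A.
Proof.
move=> pl p1 pm pi A; elim: (genUR A) => [|a A1 A2 _ h1 _ h2|y A1 _ h1].
- by rewrite p1 F1.
- by rewrite pl F_lin h1 h2.
- by rewrite pm pi star_iota F_rec h1.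
Qed.

End Main.

Lemma ac_half (W : zmodType) (a c u d : W) : d = u + u -> a - u + (c - u) + d = a + c.
Proof. by move=> ->; rewrite addrACA !subrK. Qed.

Lemma brbar_eq (K : fieldType) (hK : [pchar K] =i pred0) (V : lmodType K)
  (br : V -> V -> V) (hbr : is_lie_bracket br) (R : {linear V -> V}) x y :
  brbar br R x y = brR br R x y.
Proof.
case: hbr => hb [halt _].
have Ll z := bilin_l hb z.
have Lr z := bilin_r hb z.
have anti : forall u v, br v u = - br u v.
  move=> u v; have := halt (u + v).
  rewrite (linD (Ll _)) !(linD (Lr _)) !halt add0r addr0.
  by move=> e; apply/eqP; rewrite -addr_eq0 addrC e.
have h2 : (2%:R : K) != 0 by have /pcharf0P h := hK; rewrite h.
rewrite /brbar /trV /Rminus /brR !(linZ (Ll _)) !(linB (Ll _)).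
rewrite (anti x y) (anti x (R y)).
set h := (2%:R^-1 : K).
rewrite scalerBr scalerDr scalerN opprD opprK scalerDr.
rewrite opprK.
apply: ac_half; rewrite -scalerDl.
have -> : h + h = 1 by rewrite -mulr2n -[h *+ 2]mulr_natr mulVf.
by rewrite scale1r.
Qed.

Unset Implicit Arguments.

Theorem mainTheorem8
  (K : fieldType) (hK : [pchar K] =i pred0)
  (V : vectType K) (br : V -> V -> V) (hbr : is_lie_bracket br)
  (R : {linear V -> V}) (hR : classical_rmatrix br R)
  (* U(g) with its counit, antipode, coproduct and extended post-Lie product *)
  (U : algType K) (iota : {linear V -> U}) (hU : is_UEA br iota)
  (eps : U -> K) (heps : is_counit iota eps)
  (S : U -> U) (hS : is_antipode iota S)
  (D : U -> seq (U * U)) (hD : is_coproduct iota D)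
  (tr : U -> U -> U) (htr : is_tr_ext br R iota eps D tr)
  (* U(g_R) with its coproduct *)
  (UR : algType K) (iotaR : {linear V -> UR}) (hUR : is_UEA (brR br R) iotaR)
  (DR : UR -> seq (UR * UR)) (hDR : is_coproduct iotaR DR)
  (* the algebra morphisms R_+, R_- : U(g_R) -> U(g) *)
  (Rp Rm : {lrmorphism UR -> U})
  (hRp : forall x, Rp (iotaR x) = iota (Rplus R x))
  (hRm : forall x, Rm (iotaR x) = iota (Rminus R x)) :
  let F := Fmap DR Rp Rm S in
  (forall x y, brbar br R x y = brR br R x y) /\
  ((forall (a : K) A B, F (a *: A + B) = a *: F A + F B) /\
   F 1 = 1 /\
   (forall A B, F (A * B) = star D tr (F A) (F B)) /\
   (forall x, F (iotaR x) = iota x)) /\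
  (forall phi : UR -> U,
     (forall (a : K) A B, phi (a *: A + B) = a *: phi A + phi B) ->
     phi 1 = 1 ->
     (forall A B, phi (A * B) = star D tr (phi A) (phi B)) ->
     (forall x, phi (iotaR x) = iota x) ->
     forall A, phi A = F A).
Proof.
Proof.
move=> F; split; first by move=> x y; exact: (brbar_eq hK hbr).
split.
  split; first by move=> a A B; apply: (F_lin hS hDR).
  split; first by apply: (F1 hS hDR).
  split; first by move=> A B; apply: (F_mul hU heps hD htr hK hS hUR hDR hRp hRm).
  by move=> x; apply: (F_iota hK hS hDR hRp hRm).
move=> phi pl p1 pm pi A.
exact: (F_unique hU heps hD htr hK hS hUR hDR hRp hRm pl p1 pm pi).
Qed.
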